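(* Suppose Assumptions 1–4 hold and $p$ is convex. Let $\mathbf{x}^S$ be a social optimum and $\mathbf{x}^P$ a monopoly output, with $X^S=\sum_n x_n^S$, $X^P=\sum_n x_n^P$. (a) If $p(X^P)=p(X^S)$, then $\gamma(\mathbf{x}^P)=1$. (b) If $p(X^P)\ne p(X^S)$, then $p$ is differentiable at $X^P$; letting $c=|p'(X^P)|$, $d=\left|\dfrac{p(X^S)-p(X^P)}{X^S-X^P}\right|$ and $\overline c=c/d$, we have $\overline c\ge1$ and $\gamma(\mathbf{x}^P)\ge\dfrac{3}{3+\overline c}$. (c) The bound is tight at $\overline c=1$: there exists a model satisfying these hypotheses with $\overline c=1$ and a monopoly output whose efficiency is exactly $3/4$.
   Context: Cournot model: $N$ suppliers, inverse demand $p:[0,\infty)\to[0,\infty)$, supplier $n$ has cost $C_n:[0,\infty)\to[0,\infty)$ and chooses $x_n\ge0$; $X=\sum_n x_n$. $C_n'(0)$ is the right derivative at $0$. Assumption 1: each $C_n$ is convex, continuous, nondecreasing on $[0,\infty)$, continuously differentiable on $(0,\infty)$, with $C_n(0)=0$. Assumption 2: $p$ is continuous, nonnegative, nonincreasing, $p(0)>0$; its right derivative at $0$ exists and at every $q>0$ its left and right derivatives exist. Assumption 3: there exists $R>0$ such that $p(R)\le\min_n C_n'(0)$. Assumption 4: $p(0)>\min_n C_n'(0)$. A monopoly output is an optimal solution $\mathbf{x}^P$ of $\max_{\mathbf{x}\ge0}\ p\!\left(\sum_n x_n\right)\sum_n x_n-\sum_n C_n(x_n)$ (maximum total profit of all suppliers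 colluding). Social welfare of $\mathbf{x}\ge0$: $W(\mathbf{x})=\int_0^X p(q)\,dq-\sum_{n=1}^N C_n(x_n)$; a social optimum $\mathbf{x}^S$ maximizes $W$. Efficiency: $\gamma(\mathbf{x})=W(\mathbf{x})/W(\mathbf{x}^S)$. *)

(* Defs.v *)
From Stdlib Require Import Reals Lra ClassicalEpsilon.
Open Scope R_scope.

(* Suppliers are indexed by n = 0, ..., N-1; an output vector is x : nat -> R,
   only the components n < N matter. *)
Fixpoint sumN (N : nat) (f : nat -> R) : R :=
  match N with O => 0 | S k => sumN k f + f k end.

Definition right_deriv (f : R -> R) (x l : R) : Prop :=
  forall eps, 0 < eps -> exists delta, 0 < delta /\
    forall h, 0 < h < delta -> Rabs ((f (x + h) - f x) / h - l) < eps.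
Definition left_deriv (f : R -> R) (x l : R) : Prop :=
  forall eps, 0 < eps -> exists delta, 0 < delta /\
    forall h, - delta < h < 0 -> Rabs ((f (x + h) - f x) / h - l) < eps.

Definition convex_nonneg (f : R -> R) : Prop :=
  forall x y t, 0 <= x -> 0 <= y -> 0 <= t <= 1 ->
    f (t * x + (1 - t) * y) <= t * f x + (1 - t) * f y.
Definition nondecr_nonneg (f : R -> R) : Prop :=
  forall x y, 0 <= x -> x <= y -> f x <= f y.
Definition nonincr_nonneg (f : R -> R) : Prop :=
  forall x y, 0 <= x -> x <= y -> f y <= f x.
Definition cont_nonneg (f : R -> R) : Prop :=
  forall x, 0 <= x -> forall eps, 0 < eps -> exists delta, 0 < delta /\
    forall y, 0 <= y -> Rabs (y - x) < delta -> Rabs (f y - f x) < eps.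
Definition C1_pos (f : R -> R) : Prop :=
  exists g : R -> R, (forall x, 0 < x -> derivable_pt_lim f x (g x)) /\
                     (forall x, 0 < x -> continuity_pt g x).

Definition assumption1 (N : nat) (C : nat -> R -> R) : Prop :=
  forall n, (n < N)%nat ->
    (forall x, 0 <= x -> 0 <= C n x) /\
    convex_nonneg (C n) /\ cont_nonneg (C n) /\ nondecr_nonneg (C n) /\
    C1_pos (C n) /\ C n 0 = 0.

Definition cost_slope0 (N : nat) (C : nat -> R -> R) (dC0 : nat -> R) : Prop :=
  forall n, (n < N)%nat -> right_deriv (C n) 0 (dC0 n).

Definition assumption2 (p : R -> R) : Prop :=
  cont_nonneg p /\ (forall q, 0 <= q -> 0 <= p q) /\ nonincr_nonneg p /\
  0 < p 0 /\ (exists l, right_deriv p 0 l) /\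
  (forall q, 0 < q -> (exists l, left_deriv p q l) /\ (exists l, right_deriv p q l)).

Definition assumption3 (N : nat) (p : R -> R) (dC0 : nat -> R) : Prop :=
  exists Rb, 0 < Rb /\ forall n, (n < N)%nat -> p Rb <= dC0 n.

Definition assumption4 (N : nat) (p : R -> R) (dC0 : nat -> R) : Prop :=
  exists n, (n < N)%nat /\ dC0 n < p 0.

Definition model (N : nat) (p : R -> R) (C : nat -> R -> R) (dC0 : nat -> R) : Prop :=
  assumption1 N C /\ cost_slope0 N C dC0 /\ assumption2 p /\
  assumption3 N p dC0 /\ assumption4 N p dC0 /\ convex_nonneg p.

Definition total (N : nat) (x : nat -> R) : R := sumN N x.
Definition feasible (N : nat) (x : nat -> R) : Prop :=
  forall n, (n < N)%nat -> 0 <= x n.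

Definition profit (N : nat) (p : R -> R) (C : nat -> R -> R) (x : nat -> R) : R :=
  p (total N x) * total N x - sumN N (fun n => C n (x n)).
Definition monopoly_output (N : nat) (p : R -> R) (C : nat -> R -> R) (x : nat -> R) : Prop :=
  feasible N x /\ forall y, feasible N y -> profit N p C y <= profit N p C x.

(* Riemann integral of f over [a,b] (0 if f is not Riemann integrable;
   it is always integrable in the situations used here). *)
Definition RInt (f : R -> R) (a b : R) : R :=
  match excluded_middle_informative (exists pr : Riemann_integrable f a b, True) with
  | left H => RiemannInt (proj1_sig (constructive_indefinite_description _ H))
  | right _ => 0
  end.

Definition welfare (N : nat) (p : R -> R) (C : nat -> R -> R) (x : nat -> R) : R :=
  RInt p 0 (total N x) - sumN N (fun n => C n (x n)).
Definition social_optimum (N : nat) (p : R -> R) (C : nat -> R -> R) (x : nat -> R) : Prop :=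
  feasible N x /\ forall y, feasible N y -> welfare N p C y <= welfare N p C x.

Definition efficiency (N : nat) (p : R -> R) (C : nat -> R -> R) (xS x : nat -> R) : R :=
  welfare N p C x / welfare N p C xS.

Definition cbar (p : R -> R) (XS XP c' : R) : R :=
  Rabs c' / Rabs ((p XS - p XP) / (XS - XP)).

(* Main.v *)
Require Import Defs.
From Stdlib Require Import Reals Lra Lia ClassicalEpsilon.
From Coquelicot Require Import Coquelicot.
Open Scope R_scope.

Lemma sumN_ext N f g : (forall n, (n < N)%nat -> f n = g n) -> sumN N f = sumN N g.
Proof. induction N; simpl; intros H; auto. rewrite IHN, H; auto. Qed.

Lemma sumN_le N f g : (forall n, (n < N)%nat -> f n <= g n) -> sumN N f <= sumN N g.
Proof. induction N; simpl; intros H; [lra|]. assert (f N <= g N) by auto.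
 assert (sumN N f <= sumN N g) by auto. lra. Qed.

Lemma sumN_lin N a b f g : sumN N (fun n => a * f n + b * g n) = a * sumN N f + b * sumN N g.
Proof. induction N; simpl; [ring|]. rewrite IHN; ring. Qed.

Lemma sumN_zero N f : (forall n, (n < N)%nat -> f n = 0) -> sumN N f = 0.
Proof. induction N; simpl; intros H; auto. rewrite IHN, H; auto; lra. Qed.

Lemma sumN_nonneg N f : (forall n, (n < N)%nat -> 0 <= f n) -> 0 <= sumN N f.
Proof. intros H. apply Rle_trans with (sumN N (fun _ => 0)).
 rewrite sumN_zero; auto; lra. apply sumN_le; auto. Qed.

Lemma sumN_point N n (a : nat -> R) : (n < N)%nat ->
  sumN N (fun m => if Nat.eqb m n then a m else 0) = a n.
Proof. induction N; intros H; [lia|]. simpl.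
 destruct (Nat.eqb_spec N n).
 - subst. rewrite sumN_zero. ring. intros m Hm. destruct (Nat.eqb_spec m n); [lia|auto].
 - rewrite IHN; [ring|lia]. Qed.

Lemma RInt_bridge f a b : ex_RInt f a b -> Defs.RInt f a b = RInt f a b.
Proof. intros H. unfold Defs.RInt.
 destruct excluded_middle_informative as [e|n].
 - 
   symmetry; apply RInt_Reals.
 - exfalso; apply n. exists (ex_RInt_Reals_0 _ _ _ H); auto. Qed.

Definition ext0 (p : R -> R) x := p (Rmax 0 x).

Lemma ext0_cont p : cont_nonneg p -> forall x, continuous (ext0 p) x.
Proof. intros Hc x. apply continuity_pt_filterlim.
 intros eps Heps. destruct (Hc (Rmax 0 x) (Rmax_l 0 x) eps Heps) as [d [Hd Hy]].
 exists d; split; auto. intros y [_ Hyx]. unfold ext0, R_dist in *; simpl in *; unfold R_dist in *.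
 apply Hy. apply Rmax_l.
 unfold Rmax; destruct (Rle_dec 0 y); destruct (Rle_dec 0 x);
   apply Rabs_def1; apply Rabs_def2 in Hyx; lra. Qed.

Lemma ex_RInt_p p a b : cont_nonneg p -> 0 <= a -> 0 <= b -> ex_RInt p a b.
Proof. intros Hc Ha Hb. apply ex_RInt_ext with (ext0 p).
 - intros x [H1 H2]. unfold ext0. rewrite Rmax_right; auto.
   apply Rle_trans with (Rmin a b); [|lra]. unfold Rmin; destruct Rle_dec; lra.
 - apply (ex_RInt_continuous (V:=R_CompleteNormedModule)). intros; apply ext0_cont; auto. Qed.

Lemma Defs_RInt_p p a b : cont_nonneg p -> 0 <= a -> 0 <= b -> Defs.RInt p a b = RInt p a b.
Proof. intros; apply RInt_bridge, ex_RInt_p; auto. Qed.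

Lemma RInt_diff p a b : cont_nonneg p -> 0 <= a -> 0 <= b ->
  RInt p 0 b - RInt p 0 a = RInt p a b.
Proof. intros Hc Ha Hb. rewrite <- (RInt_Chasles p 0 a b); try apply ex_RInt_p; try lra; auto.
 unfold plus; simpl. ring. Qed.

Lemma RInt_const_R a b c : RInt (fun _ => c) a b = (b - a) * c.
Proof. rewrite RInt_const. reflexivity. Qed.

Lemma RInt_lb p a b c : cont_nonneg p -> 0 <= a <= b ->
  (forall x, a < x < b -> c <= p x) -> (b - a) * c <= RInt p a b.
Proof. intros Hc Hab H. rewrite <- RInt_const_R. apply RInt_le; [lra| |apply ex_RInt_p; [auto|lra|lra]|intros x Hx; apply H; exact Hx].
 apply ex_RInt_const. Qed.

Lemma RInt_ub p a b c : cont_nonneg p -> 0 <= a <= b ->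
  (forall x, a < x < b -> p x <= c) -> RInt p a b <= (b - a) * c.
Proof. intros Hc Hab H. rewrite <- RInt_const_R. apply RInt_le; [lra|apply ex_RInt_p; [auto|lra|lra]| |intros x Hx; apply H; exact Hx].
 apply ex_RInt_const. Qed.

Lemma RInt_affine al be x0 a b :
  RInt (fun x => al + be * (x - x0)) a b = al * (b - a) + be * ((b - x0)^2 - (a - x0)^2) / 2.
Proof.
 apply is_RInt_unique.
 replace (al * (b - a) + be * ((b - x0)^2 - (a - x0)^2) / 2) with
   (minus ((fun x => al * x + be * (x - x0)^2 / 2) b) ((fun x => al * x + be * (x - x0)^2 / 2) a)).
 2:{ unfold minus, plus, opp; simpl. field. }
 apply (is_RInt_derive (V:=R_CompleteNormedModule) (fun x => al * x + be * (x - x0)^2 / 2) (fun x => al + be * (x - x0))).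
 - intros x _. auto_derive; auto. field.
 - intros x _. apply continuity_pt_filterlim. apply continuity_pt_plus.
   apply continuity_pt_const; intros u v; auto.
   apply continuity_pt_mult. apply continuity_pt_const; intros u v; auto.
   apply continuity_pt_minus. apply continuity_pt_id. apply continuity_pt_const; intros u v; auto.
Qed.

Lemma ex_RInt_affine al be x0 a b : ex_RInt (fun x => al + be * (x - x0)) a b.
Proof. apply (ex_RInt_continuous (V:=R_CompleteNormedModule)). intros x _.
 apply continuity_pt_filterlim. apply continuity_pt_plus.
   apply continuity_pt_const; intros u v; auto.
   apply continuity_pt_mult. apply continuity_pt_const; intros u v; auto.
   apply continuity_pt_minus. apply continuity_pt_id. apply continuity_pt_const; intros u v; auto.
Qed.

Lemma RInt_lb_aff p a b al be x0 : cont_nonneg p -> 0 <= a <= b ->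
  (forall x, a < x < b -> al + be * (x - x0) <= p x) ->
  al * (b - a) + be * ((b - x0)^2 - (a - x0)^2) / 2 <= RInt p a b.
Proof. intros Hc Hab H. rewrite <- RInt_affine. apply RInt_le; [lra| apply ex_RInt_affine |apply ex_RInt_p; [auto|lra|lra]|intros x Hx; apply H; exact Hx]. Qed.

Lemma RInt_ub_aff p a b al be x0 : cont_nonneg p -> 0 <= a <= b ->
  (forall x, a < x < b -> p x <= al + be * (x - x0)) ->
  RInt p a b <= al * (b - a) + be * ((b - x0)^2 - (a - x0)^2) / 2.
Proof. intros Hc Hab H. rewrite <- RInt_affine. apply RInt_le; [lra|apply ex_RInt_p; [auto|lra|lra]| apply ex_RInt_affine |intros x Hx; apply H; exact Hx]. Qed.

Lemma conv_pt p x y t : convex_nonneg p -> 0 <= x -> 0 <= y -> 0 <= t <= 1 ->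
  forall z, z = t * x + (1 - t) * y -> p z <= t * p x + (1 - t) * p y.
Proof. intros Hc Hx Hy Ht z ->. apply Hc; auto. Qed.

Lemma supp_right p q r : convex_nonneg p -> 0 <= q -> right_deriv p q r ->
  forall y, 0 <= y -> p q + r * (y - q) <= p y.
Proof.
 intros Hc Hq Hd y Hy.
 destruct (Rtotal_order y q) as [Hlt|[Heq|Hgt]].
 - destruct (Rle_lt_dec (p q + r * (y - q)) (p y)) as [ok|Hn]; auto. exfalso.
   set (s := (p q - p y) / (q - y)).
   assert (Es : p q - p y = s * (q - y)) by (unfold s; field; lra).
   assert (Hsr : r < s) by nra.
   destruct (Hd (s - r)) as [d [Hd0 Hdd]]; [lra|].
   set (h := d / 2).
   assert (Hh : 0 < h < d) by (unfold h; lra).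
   specialize (Hdd h Hh).
   set (Q := (p (q + h) - p q) / h) in *.
   assert (EQ : p (q + h) - p q = Q * h) by (unfold Q; field; lra).
   set (t := h / (q - y + h)).
   assert (Ht : 0 <= t <= 1).
   { unfold t; split. apply Rmult_le_pos; [lra|]. left; apply Rinv_0_lt_compat; lra.
     apply Rmult_le_reg_r with (q - y + h); [lra|]. unfold Rdiv; rewrite Rmult_assoc, Rinv_l; lra. }
   assert (Hcv := conv_pt p y (q + h) t Hc Hy ltac:(lra) Ht q ltac:(unfold t; field; lra)).
   assert (Et : t * (q - y + h) = h) by (unfold t; field; lra).
   assert (H1 : t * (p q - p y) <= (1 - t) * (p (q + h) - p q)) by lra.
   rewrite Es, EQ in H1.
   assert (E1 : 1 - t = (q - y) / (q - y + h)) by (unfold t; field; lra).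
   rewrite E1 in H1. unfold t in H1.
   assert (H2 : h * (s * (q - y)) <= (q - y) * (Q * h)).
   { apply Rmult_le_reg_r with (/ (q - y + h)). apply Rinv_0_lt_compat; lra.
     unfold Rdiv in H1. nra. }
   assert (s <= Q). { apply Rmult_le_reg_r with ((q - y) * h). apply Rmult_lt_0_compat; lra. nra. }
   apply Rabs_def2 in Hdd. lra.
 - subst; lra.
 - destruct (Rle_lt_dec (p q + r * (y - q)) (p y)) as [ok|Hn]; auto. exfalso.
   set (m := (p y - p q) / (y - q)).
   assert (Em : p y - p q = m * (y - q)) by (unfold m; field; lra).
   assert (Hmr : m < r) by nra.
   destruct (Hd (r - m)) as [d [Hd0 Hdd]]; [lra|].
   set (h := Rmin d (y - q) / 2).
   assert (Hh : 0 < h < d /\ h < y - q).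
   { unfold h, Rmin; destruct Rle_dec; lra. }
   specialize (Hdd h (proj1 Hh)).
   set (Q := (p (q + h) - p q) / h) in *.
   assert (EQ : p (q + h) - p q = Q * h) by (unfold Q; field; lra).
   set (t := h / (y - q)).
   assert (Ht : 0 <= t <= 1).
   { unfold t; split. apply Rmult_le_pos; [lra|]. left; apply Rinv_0_lt_compat; lra.
     apply Rmult_le_reg_r with (y - q); [lra|]. unfold Rdiv; rewrite Rmult_assoc, Rinv_l; lra. }
   assert (Hcv := conv_pt p y q t Hc Hy Hq Ht (q + h) ltac:(unfold t; field; lra)).
   assert (Et : t * (y - q) = h) by (unfold t; field; lra).
   assert (Q * h <= m * h) by nra.
   assert (Q <= m) by nra.
   apply Rabs_def2 in Hdd. lra.
Qed.

Lemma supp_left p q l : convex_nonneg p -> 0 < q -> left_deriv p q l ->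
  forall y, 0 <= y -> p q + l * (y - q) <= p y.
Proof.
 intros Hc Hq Hd y Hy.
 destruct (Rtotal_order y q) as [Hlt|[Heq|Hgt]].
 - destruct (Rle_lt_dec (p q + l * (y - q)) (p y)) as [ok|Hn]; auto. exfalso.
   set (m := (p q - p y) / (q - y)).
   assert (Em : p q - p y = m * (q - y)) by (unfold m; field; lra).
   assert (Hml : l < m) by nra.
   destruct (Hd (m - l)) as [d [Hd0 Hdd]]; [lra|].
   set (h := - (Rmin d (q - y) / 2)).
   assert (Hh : - d < h < 0 /\ y - q < h).
   { unfold h, Rmin; destruct Rle_dec; lra. }
   specialize (Hdd h (proj1 Hh)).
   set (Q := (p (q + h) - p q) / h) in *.
   assert (EQ : p (q + h) - p q = Q * h) by (unfold Q; field; lra).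
   set (t := h / (y - q)).
   assert (Ht : 0 <= t <= 1).
   { unfold t. replace (h / (y - q)) with ((- h) / (q - y)) by (field; lra). split.
     apply Rmult_le_pos; [lra|]. left; apply Rinv_0_lt_compat; lra.
     apply Rmult_le_reg_r with (q - y); [lra|]. unfold Rdiv; rewrite Rmult_assoc, Rinv_l; lra. }
   assert (Hcv := conv_pt p y q t Hc Hy ltac:(lra) Ht (q + h) ltac:(unfold t; field; lra)).
   assert (Et : t * (q - y) = - h) by (unfold t; field; lra).
   assert (Q * h <= m * h) by nra.
   assert (m <= Q) by nra.
   apply Rabs_def2 in Hdd. lra.
 - subst; lra.
 - destruct (Rle_lt_dec (p q + l * (y - q)) (p y)) as [ok|Hn]; auto. exfalso.
   set (m := (p y - p q) / (y - q)).
   assert (Em : p y - p q = m * (y - q)) by (unfold m; field; lra).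
   assert (Hml : m < l) by nra.
   destruct (Hd (l - m)) as [d [Hd0 Hdd]]; [lra|].
   set (h := - (Rmin d q / 2)).
   assert (Hh : - d < h < 0 /\ - q < h).
   { unfold h, Rmin; destruct Rle_dec; lra. }
   specialize (Hdd h (proj1 Hh)).
   set (Q := (p (q + h) - p q) / h) in *.
   assert (EQ : p (q + h) - p q = Q * h) by (unfold Q; field; lra).
   set (t := - h / (y - q - h)).
   assert (Ht : 0 <= t <= 1).
   { unfold t; split. apply Rmult_le_pos; [lra|]. left; apply Rinv_0_lt_compat; lra.
     apply Rmult_le_reg_r with (y - q - h); [lra|]. unfold Rdiv; rewrite Rmult_assoc, Rinv_l; lra. }
   assert (Hcv := conv_pt p y (q + h) t Hc Hy ltac:(lra) Ht q ltac:(unfold t; field; lra)).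
   assert (Et : t * (y - q - h) = - h) by (unfold t; field; lra).
   assert (E1 : (1 - t) * (y - q - h) = y - q) by (unfold t; field; lra).
   assert (H1 : t * (p q - p y) <= (1 - t) * (p (q + h) - p q)) by lra.
   rewrite EQ in H1.
   assert (H2 : (y - q - h) * (t * (p q - p y)) <= (y - q - h) * ((1 - t) * (Q * h))).
   { apply Rmult_le_compat_l; lra. }
   assert (H3 : - h * (- (m * (y - q))) <= (y - q) * (Q * h)).
   { replace (- h * - (m * (y - q))) with ((y - q - h) * (t * (p q - p y))) by (replace (p q - p y) with (-(m*(y-q))) by lra;
        replace ((y - q - h) * (t * - (m * (y - q)))) with ((t * (y - q - h)) * - (m*(y-q))) by ring;
        rewrite Et; ring).
     replace ((y - q) * (Q * h)) with ((y - q - h) * ((1 - t) * (Q * h))) by (replace ((y - q - h) * ((1 - t) * (Q * h))) with (((1 - t) * (y - q - h)) * (Q * h)) by ring;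
        rewrite E1; ring).
     exact H2. }
   assert (h * m <= h * Q) by nra.
   assert (Q <= m) by nra.
   apply Rabs_def2 in Hdd. lra.
Qed.

Lemma chord_above p a b x : convex_nonneg p -> 0 <= a -> a < b -> a <= x <= b ->
  p x <= p a + (p b - p a) / (b - a) * (x - a).
Proof. intros Hc Ha Hab Hx.
 set (t := (x - a) / (b - a)).
 assert (Ht : 0 <= t <= 1).
 { unfold t; split. apply Rmult_le_pos; [lra|]. left; apply Rinv_0_lt_compat; lra.
   apply Rmult_le_reg_r with (b - a); [lra|]. unfold Rdiv; rewrite Rmult_assoc, Rinv_l; lra. }
 assert (H := conv_pt p b a t Hc ltac:(lra) Ha Ht x ltac:(unfold t; field; lra)).
 replace (p a + (p b - p a) / (b - a) * (x - a)) with (t * p b + (1 - t) * p a) by (unfold t; field; lra).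
 exact H. Qed.

Lemma lr_deriv p q l : left_deriv p q l -> right_deriv p q l -> derivable_pt_lim p q l.
Proof. intros Hl Hr eps Heps.
 destruct (Hl eps Heps) as [d1 [Hd1 H1]]. destruct (Hr eps Heps) as [d2 [Hd2 H2]].
 exists (mkposreal (Rmin d1 d2) (Rmin_pos _ _ Hd1 Hd2)). intros h Hh0 Hh. simpl in Hh.
 apply Rabs_def2 in Hh. assert (Rmin d1 d2 <= d1) by apply Rmin_l. assert (Rmin d1 d2 <= d2) by apply Rmin_r.
 destruct (Rlt_or_le h 0). apply H1; lra. apply H2; lra. Qed.

Lemma l_le_r p q l r : convex_nonneg p -> 0 < q -> left_deriv p q l -> right_deriv p q r -> l <= r.
Proof. intros Hc Hq Hl Hr. destruct (Rle_lt_dec l r) as [ok|Hn]; auto. exfalso.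
 destruct (Hl (l - r)) as [d [Hd H]]; [lra|].
 set (h := - (Rmin d q / 2)).
 assert (Hh : - d < h < 0 /\ - q < h). { unfold h, Rmin; destruct Rle_dec; lra. }
 specialize (H h (proj1 Hh)).
 assert (Hs := supp_right p q r Hc ltac:(lra) Hr (q + h) ltac:(lra)).
 set (Q := (p (q + h) - p q) / h) in *.
 assert (EQ : p (q + h) - p q = Q * h) by (unfold Q; field; lra).
 assert (Q * h >= r * h) by nra.
 assert (Q <= r) by nra.
 apply Rabs_def2 in H. lra. Qed.

Lemma rderiv_nonpos p q r : nonincr_nonneg p -> 0 <= q -> right_deriv p q r -> r <= 0.
Proof. intros Hm Hq Hr. destruct (Rle_lt_dec r 0) as [ok|Hn]; auto. exfalso.
 destruct (Hr r Hn) as [d [Hd H]]. specialize (H (d/2) ltac:(lra)).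
 assert (p (q + d/2) <= p q) by (apply Hm; lra).
 set (Q := (p (q + d/2) - p q) / (d/2)) in *.
 assert (EQ : p (q + d/2) - p q = Q * (d/2)) by (unfold Q; field; lra).
 assert (Q <= 0) by nra. apply Rabs_def2 in H. lra. Qed.

Lemma sumN_scal N t f : sumN N (fun n => t * f n) = t * sumN N f.
Proof. induction N; simpl; [ring|]. rewrite IHN; ring. Qed.

Lemma small_profit p C0 c0 : cont_nonneg p -> (forall h, 0 <= h -> True) ->
  right_deriv C0 0 c0 -> C0 0 = 0 -> c0 < p 0 ->
  exists e, 0 < e /\ C0 e < p e * e.
Proof. intros Hc _ Hd H0 Hlt.
 set (g := p 0 - c0).
 destruct (Hd (g/2)) as [d1 [Hd1 H1]]; [unfold g; lra|].
 destruct (Hc 0 (Rle_refl 0) (g/2)) as [d2 [Hd2 H2]]; [unfold g; lra|].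
 set (e := Rmin d1 d2 / 2).
 assert (He : 0 < e < d1 /\ e < d2). { unfold e, Rmin; destruct Rle_dec; lra. }
 exists e; split; [lra|].
 specialize (H1 e (proj1 He)). specialize (H2 e ltac:(lra) ltac:(rewrite Rminus_0_r, Rabs_right; lra)).
 rewrite Rplus_0_l, H0, Rminus_0_r in H1.
 apply Rabs_def2 in H1. apply Rabs_def2 in H2.
 set (Q := C0 e / e) in *. assert (C0 e = Q * e) by (unfold Q; field; lra).
 unfold g in *. nra. Qed.

Definition cost N (C : nat -> R -> R) x := sumN N (fun n => C n (x n)).
Definition comb (t : R) (x y : nat -> R) := fun n => t * x n + (1 - t) * y n.

Lemma feasible_comb N t x y : feasible N x -> feasible N y -> 0 <= t <= 1 -> feasible N (comb t x y).
Proof. intros Hx Hy Ht n Hn. unfold comb. specialize (Hx n Hn); specialize (Hy n Hn). nra. Qed.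

Lemma total_comb N t x y : total N (comb t x y) = t * total N x + (1 - t) * total N y.
Proof. unfold total, comb. apply sumN_lin. Qed.

Lemma total_nonneg N x : feasible N x -> 0 <= total N x.
Proof. intros H; apply sumN_nonneg; auto. Qed.

Lemma cost_nonneg N C x : assumption1 N C -> feasible N x -> 0 <= cost N C x.
Proof. intros HA Hx. apply sumN_nonneg. intros n Hn. apply (HA n Hn). apply Hx; auto. Qed.

Lemma cost_comb N C t x y : assumption1 N C -> feasible N x -> feasible N y -> 0 <= t <= 1 ->
  cost N C (comb t x y) <= t * cost N C x + (1 - t) * cost N C y.
Proof. intros HA Hx Hy Ht. unfold cost. rewrite <- sumN_lin. apply sumN_le.
 intros n Hn. unfold comb. destruct (HA n Hn) as [_ [Hc _]]. apply Hc; auto. Qed.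

Lemma cost_scale N C t x : assumption1 N C -> feasible N x -> 0 <= t <= 1 ->
  cost N C (fun n => t * x n) <= t * cost N C x.
Proof. intros HA Hx Ht.
 assert (E : cost N C (fun n => t * x n) = cost N C (comb t x (fun _ => 0))).
 { unfold cost, comb. apply sumN_ext. intros. f_equal. ring. }
 rewrite E. eapply Rle_trans. apply cost_comb; auto. intros n _; lra.
 assert (cost N C (fun _ => 0) = 0). { unfold cost. apply sumN_zero. intros n Hn. apply (HA n Hn). }
 rewrite H. lra. Qed.

Lemma hderiv N C x : assumption1 N C -> feasible N x ->
  exists K, derivable_pt_lim (fun t => sumN N (fun n => C n (t * x n))) 1 K.
Proof. intros HA Hx. induction N.
 - exists 0. simpl. apply derivable_pt_lim_const.
 - assert (HA' : assumption1 N C) by (intros n Hn; apply HA; lia).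
   assert (Hx' : feasible N x) by (intros n Hn; apply Hx; lia).
   destruct (IHN HA' Hx') as [K1 HK1].
   assert (HK2 : exists K2, derivable_pt_lim (fun t => C N (t * x N)) 1 K2).
   { destruct (HA N (Nat.lt_succ_diag_r N)) as [_ [_ [_ [_ [[g [Hg _]] H0]]]]].
     destruct (Hx N (Nat.lt_succ_diag_r N)) as [Hpos|Hz].
     - exists (g (x N) * x N).
       assert (D1 : derivable_pt_lim (fun t => t * x N) 1 (x N)).
       { intros eps Heps. exists (mkposreal 1 Rlt_0_1). intros h Hh _.
         replace (((1 + h) * x N - 1 * x N) / h - x N) with 0 by (field; auto).
         rewrite Rabs_R0; auto. }
       assert (D2 : derivable_pt_lim (C N) ((fun t => t * x N) 1) (g (x N))).
       { simpl. rewrite Rmult_1_l. apply Hg; auto. }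
       exact (derivable_pt_lim_comp _ _ _ _ _ D1 D2).
     - exists 0. intros eps Heps. exists (mkposreal 1 Rlt_0_1). intros h _ _.
       rewrite <- Hz, !Rmult_0_r. unfold Rminus. rewrite Rplus_opp_r. unfold Rdiv.
       rewrite Rmult_0_l, Rplus_opp_r, Rabs_R0; auto. }
   destruct HK2 as [K2 HK2].
   exists (K1 + K2). simpl.
   exact (derivable_pt_lim_plus _ _ _ _ _ HK1 HK2).
Qed.

Lemma profit_scaled N p C x t :
  profit N p C (fun n => t * x n) = p (t * total N x) * (t * total N x) - sumN N (fun n => C n (t * x n)).
Proof. unfold profit, total. rewrite sumN_scal. reflexivity. Qed.

Lemma cost_1 N C x : sumN N (fun n => C n (1 * x n)) = cost N C x.
Proof. unfold cost. apply sumN_ext. intros; rewrite Rmult_1_l; auto. Qed.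

Lemma feasible_scale N x t : feasible N x -> 0 <= t -> feasible N (fun n => t * x n).
Proof. intros H Ht n Hn. specialize (H n Hn). nra. Qed.

Lemma mono_lr N p C xP l r : assumption1 N C -> convex_nonneg p -> monopoly_output N p C xP ->
  0 < total N xP -> left_deriv p (total N xP) l -> right_deriv p (total N xP) r -> r <= l.
Proof.
 intros HA Hcv [HF Hopt] HP Hl Hr.
 set (P := total N xP) in *.
 set (h := fun t => sumN N (fun n => C n (t * xP n))).
 destruct (hderiv N C xP HA HF) as [K HK]. fold h in HK.
 assert (Hprof : forall t, 0 <= t -> p (t * P) * (t * P) - h t <= p P * P - h 1).
 { intros t Ht. assert (H := Hopt _ (feasible_scale N xP t HF Ht)).
   rewrite profit_scaled in H. unfold h. rewrite cost_1. fold P. unfold profit in H. exact H. }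
 destruct (Rle_lt_dec r l) as [ok|Hn]; auto. exfalso.
 set (g := r - l). set (A := Rabs (r + l) + 1).
 assert (HA0 : 0 < A) by (unfold A; generalize (Rabs_pos (r + l)); lra).
 assert (HP2 : 0 < P * P) by nra.
 set (eps := P * P * g / 4).
 destruct (HK eps) as [d HD]. { unfold eps, g. apply Rmult_lt_0_compat; [nra|lra]. }
 set (k := Rmin (Rmin (d/2) (1/2)) (g / (4 * A))).
 assert (Hd := cond_pos d).
 assert (Hg4 : 0 < g / (4 * A)). { unfold g. apply Rmult_lt_0_compat; [lra|]. apply Rinv_0_lt_compat; lra. }
 assert (Hk : 0 < k /\ k < d /\ k <= 1/2 /\ k <= g / (4 * A)).
 { unfold k, Rmin; repeat destruct Rle_dec; repeat split; lra. }
 assert (HkA : k * A <= g / 4).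
 { apply Rle_trans with (g / (4 * A) * A). apply Rmult_le_compat_r; lra.
   right; field; lra. }
 assert (D1 := HD k ltac:(lra) ltac:(rewrite Rabs_right; lra)).
 assert (D2 := HD (- k) ltac:(lra) ltac:(rewrite Rabs_left; lra)).
 apply Rabs_def2 in D1. apply Rabs_def2 in D2.
 set (U := (h (1 + k) - h 1) / k) in *.
 set (V := (h (1 + - k) - h 1) / - k) in *.
 assert (EU : h (1 + k) - h 1 = U * k) by (unfold U; field; lra).
 assert (EV : h (1 + - k) - h 1 = - (V * k)) by (unfold V; field; lra).
 assert (M1 := Hprof (1 + k) ltac:(lra)).
 assert (M2 := Hprof (1 + - k) ltac:(lra)).
 assert (S1 := supp_right p P r Hcv ltac:(lra) Hr ((1 + k) * P) ltac:(nra)).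
 assert (S2 := supp_left p P l Hcv HP Hl ((1 + - k) * P) ltac:(nra)).
 set (p1 := p ((1 + k) * P)) in *. set (p2 := p ((1 + - k) * P)) in *.
 assert (T1 : (1 + k) * P * (p P + r * k * P) <= (1 + k) * P * p1).
 { apply Rmult_le_compat_l. nra. replace (r * k * P) with (r * ((1 + k) * P - P)) by ring. lra. }
 assert (T2 : (1 - k) * P * (p P - l * k * P) <= (1 - k) * P * p2).
 { apply Rmult_le_compat_l. nra. replace (- (l * k * P)) with (l * ((1 + - k) * P - P)) by ring. lra. }
 assert (Hsum : k * (P * P) * g + k * k * (P * P) * (r + l) <= k * (U - V)).
 { unfold g. nra. }
 assert (Hab : - (k * A) <= k * (r + l)).
 { unfold A. assert (- Rabs (r + l) <= r + l) by (apply Rabs_def2b || (generalize (Rabs_pos (r+l)); unfold Rabs; destruct Rcase_abs; lra)).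
   nra. }
 assert (Hx1 : - (g / 4) * (P * P) <= k * (r + l) * (P * P)) by nra.
 assert (Hx2 : (P * P) * g - (g / 4) * (P * P) <= U - V).
 { apply Rmult_le_reg_l with k; [lra|]. nra. }
 unfold eps in D1, D2. lra.
Qed.

Definition pt (n : nat) (e : R) : nat -> R := fun m => if Nat.eqb m n then e else 0.

Lemma pt_feasible N n e : 0 <= e -> feasible N (pt n e).
Proof. intros He m _. unfold pt. destruct Nat.eqb; lra. Qed.

Lemma pt_total N n e : (n < N)%nat -> total N (pt n e) = e.
Proof. intros H. unfold total, pt. apply (sumN_point N n (fun _ => e) H). Qed.

Lemma pt_cost N C n e : assumption1 N C -> (n < N)%nat -> cost N C (pt n e) = C n e.
Proof. intros HA H. unfold cost, pt.
 rewrite <- (sumN_point N n (fun m => C m e) H). apply sumN_ext.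
 intros m Hm. destruct (Nat.eqb m n); auto. apply (HA m Hm). Qed.

Lemma exists_small N p C dC0 : model N p C dC0 ->
  exists n e, (n < N)%nat /\ 0 < e /\ C n e < p e * e.
Proof. intros [HA [Hs [[Hc _] [_ [HA4 _]]]]].
 destruct HA4 as [n [Hn Hlt]].
 destruct (small_profit p (C n) (dC0 n) Hc (fun _ _ => I) (Hs n Hn) ltac:(apply (HA n Hn)) Hlt) as [e [He1 He2]].
 exists n, e; auto. Qed.

Lemma welfare_eq N p C x : cont_nonneg p -> feasible N x ->
  welfare N p C x = RInt p 0 (total N x) - cost N C x.
Proof. intros Hc Hx. unfold welfare. rewrite Defs_RInt_p; auto. lra. apply total_nonneg; auto. Qed.

Lemma WS_pos N p C dC0 xS : model N p C dC0 -> social_optimum N p C xS -> 0 < welfare N p C xS.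
Proof. intros Hm [HF Hopt].
 destruct (exists_small N p C dC0 Hm) as [n [e [Hn [He Hlt]]]].
 destruct Hm as [HA [_ [[Hc [_ [Hni _]]] _]]].
 assert (H := Hopt (pt n e) (pt_feasible N n e ltac:(lra))).
 rewrite (welfare_eq N p C (pt n e)) in H; auto; [|apply pt_feasible; lra].
 rewrite pt_total, pt_cost in H; auto.
 assert (Hl : (e - 0) * p e <= RInt p 0 e).
 { apply RInt_lb; auto. lra. intros x Hx. apply Hni; lra. }
 nra. Qed.

Lemma P_pos N p C dC0 xP : model N p C dC0 -> monopoly_output N p C xP -> 0 < total N xP.
Proof. intros Hm [HF Hopt].
 destruct (exists_small N p C dC0 Hm) as [n [e [Hn [He Hlt]]]].
 destruct Hm as [HA _].
 assert (H := Hopt (pt n e) (pt_feasible N n e ltac:(lra))).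
 unfold profit in H. rewrite pt_total in H; auto.
 change (sumN N (fun n0 => C n0 (pt n e n0))) with (cost N C (pt n e)) in H.
 rewrite pt_cost in H; auto.
 change (sumN N (fun n0 => C n0 (xP n0))) with (cost N C xP) in H.
 assert (Hc := cost_nonneg N C xP HA HF).
 assert (Ht := total_nonneg N xP HF).
 destruct Ht as [Ht|Ht]; auto. rewrite <- Ht in H. lra. Qed.

Lemma part_a N p C dC0 xS xP : model N p C dC0 -> social_optimum N p C xS -> monopoly_output N p C xP ->
  p (total N xP) = p (total N xS) -> efficiency N p C xS xP = 1.
Proof. intros Hm HS HP Heq.
 assert (HWS := WS_pos N p C dC0 xS Hm HS).
 destruct HS as [HFS HoS]. destruct HP as [HFP HoP].
 destruct Hm as [HA [_ [[Hc [_ [Hni _]]] _]]].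
 assert (H1 := HoS xP HFP). assert (H2 := HoP xS HFS).
 unfold efficiency.
 rewrite !welfare_eq in *; auto.
 unfold profit in H2.
 change (sumN N (fun n0 => C n0 (xP n0))) with (cost N C xP) in H2.
 change (sumN N (fun n0 => C n0 (xS n0))) with (cost N C xS) in H2.
 set (P := total N xP) in *. set (S := total N xS) in *.
 assert (HP0 : 0 <= P) by (apply total_nonneg; auto).
 assert (HS0 : 0 <= S) by (apply total_nonneg; auto).
 assert (Hd := RInt_diff p P S Hc HP0 HS0).
 assert (Hi : RInt p P S = (S - P) * p P).
 { rewrite <- RInt_const_R. apply RInt_ext. intros x Hx.
   unfold Rmin, Rmax in Hx. destruct Rle_dec.
   - assert (p x <= p P) by (apply Hni; lra). assert (p S <= p x) by (apply Hni; lra). lra.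
   - assert (p x <= p S) by (apply Hni; lra). assert (p P <= p x) by (apply Hni; lra). lra. }
 assert (E : RInt p 0 P - cost N C xP = RInt p 0 S - cost N C xS).
 { rewrite Heq in H2, Hi. lra. }
 rewrite E. field. lra. Qed.

Lemma F3 N p C xP c' : assumption1 N C -> monopoly_output N p C xP ->
  (forall y, 0 <= y -> p (total N xP) + c' * (y - total N xP) <= p y) -> c' <= 0 ->
  cost N C xP <= p (total N xP) * total N xP + c' * (total N xP * total N xP).
Proof. intros HA [HF Hopt] Htan Hc'.
 set (P := total N xP) in *.
 assert (HP0 : 0 <= P) by (apply total_nonneg; auto).
 set (cP := cost N C xP).
 assert (Hb : forall t, 0 < t < 1 -> cP <= p P * P + c' * t * (P * P)).
 { intros t Ht.
   assert (H := Hopt _ (feasible_scale N xP t HF ltac:(lra))).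
   rewrite profit_scaled in H. fold P in H. unfold profit in H. fold P in H.
   change (sumN N (fun n => C n (t * xP n))) with (cost N C (fun n => t * xP n)) in H.
   change (sumN N (fun n => C n (xP n))) with cP in H.
   assert (Hs := cost_scale N C t xP HA HF ltac:(lra)). fold cP in Hs.
   assert (Tg := Htan (t * P) ltac:(nra)).
   assert (T2 : (p P + c' * (t * P - P)) * (t * P) <= p (t * P) * (t * P)).
   { apply Rmult_le_compat_r; nra. }
   assert (H3 : (1 - t) * cP <= (1 - t) * (p P * P + c' * t * (P * P))) by nra.
   apply Rmult_le_reg_l with (1 - t); lra. }
 destruct (Rle_lt_dec cP (p P * P + c' * (P * P))) as [ok|Hn]; auto. exfalso.
 set (g := cP - (p P * P + c' * (P * P))).
 set (B := - c' * (P * P) + 1).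
 assert (HB : 1 <= B) by (unfold B; nra).
 set (s := Rmin (1/2) (g / (2 * B))).
 assert (Hg2 : 0 < g / (2 * B)). { apply Rmult_lt_0_compat. unfold g; lra. apply Rinv_0_lt_compat; lra. }
 assert (Hs : 0 < s <= 1/2 /\ s <= g / (2 * B)). { unfold s, Rmin; destruct Rle_dec; lra. }
 assert (HsB : s * B <= g / 2).
 { apply Rle_trans with (g / (2 * B) * B). apply Rmult_le_compat_r; lra. right; field; lra. }
 specialize (Hb (1 - s) ltac:(lra)).
 unfold B in HsB. unfold g in *. nra. Qed.

Lemma F4 N p C xP xS c' : assumption1 N C -> monopoly_output N p C xP -> feasible N xS ->
  (forall y, 0 <= y -> p (total N xP) + c' * (y - total N xP) <= p y) ->
  (total N xS - total N xP) * (p (total N xP) + c' * total N xP) <= cost N C xS - cost N C xP.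
Proof. intros HA [HF Hopt] HFS Htan.
 set (P := total N xP) in *. set (S := total N xS).
 assert (HP0 : 0 <= P) by (apply total_nonneg; auto).
 assert (HS0 : 0 <= S) by (apply total_nonneg; auto).
 set (D := S - P). set (dC := cost N C xS - cost N C xP).
 assert (Hb : forall t, 0 < t <= 1 -> D * (p P + c' * P) + c' * t * (D * D) <= dC).
 { intros t Ht.
   assert (Hf := feasible_comb N t xS xP HFS HF ltac:(lra)).
   assert (H := Hopt _ Hf). unfold profit in H. rewrite total_comb in H. fold P S in H.
   change (sumN N (fun n => C n (comb t xS xP n))) with (cost N C (comb t xS xP)) in H.
   change (sumN N (fun n => C n (xP n))) with (cost N C xP) in H.
   assert (Hc := cost_comb N C t xS xP HA HFS HF ltac:(lra)).
   assert (EY : t * S + (1 - t) * P = P + t * D) by (unfold D; ring).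
   rewrite EY in H.
   assert (Tg := Htan (P + t * D) ltac:(unfold D; nra)).
   assert (T2 : (p P + c' * (P + t * D - P)) * (P + t * D) <= p (P + t * D) * (P + t * D)).
   { apply Rmult_le_compat_r; [unfold D; nra | exact Tg]. }
   assert (H3 : t * (D * (p P + c' * P) + c' * t * (D * D)) <= t * dC) by (unfold dC; nra).
   apply Rmult_le_reg_l with t; lra. }
 destruct (Rle_lt_dec (D * (p P + c' * P)) dC) as [ok|Hn]; auto. exfalso.
 set (g := D * (p P + c' * P) - dC).
 set (B := Rabs c' * (D * D) + 1).
 assert (HB : 1 <= B) by (unfold B; generalize (Rabs_pos c'); nra).
 set (s := Rmin 1 (g / (2 * B))).
 assert (Hg2 : 0 < g / (2 * B)). { apply Rmult_lt_0_compat. unfold g; lra. apply Rinv_0_lt_compat; lra. }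
 assert (Hs : 0 < s <= 1 /\ s <= g / (2 * B)). { unfold s, Rmin; destruct Rle_dec; lra. }
 assert (HsB : s * B <= g / 2).
 { apply Rle_trans with (g / (2 * B) * B). apply Rmult_le_compat_r; lra. right; field; lra. }
 specialize (Hb s ltac:(lra)).
 assert (Ha : - (Rabs c') <= c') by (unfold Rabs; destruct Rcase_abs; lra).
 assert (Hx : - (Rabs c' * (D * D)) * s <= c' * s * (D * D)).
 { assert (0 <= D * D) by nra. assert (0 <= (D * D) * s) by nra.
   replace (- (Rabs c' * (D * D)) * s) with (- (Rabs c') * (D * D * s)) by ring.
   replace (c' * s * (D * D)) with (c' * (D * D * s)) by ring.
   apply Rmult_le_compat_r; auto. }
 unfold B in HsB.
 assert (E1 : s * (Rabs c' * (D * D) + 1) = Rabs c' * (D * D) * s + s) by ring.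
 rewrite E1 in HsB. fold g in Hb. unfold g in Hs.
 assert (g = D * (p P + c' * P) - dC) by reflexivity. lra. Qed.

Lemma F5 N p C xS xP : assumption1 N C -> cont_nonneg p -> nonincr_nonneg p ->
  social_optimum N p C xS -> feasible N xP ->
  cost N C xS - cost N C xP <= (total N xS - total N xP) * p (total N xS).
Proof. intros HA Hc Hni [HF Hopt] HFP.
 set (P := total N xP). set (S := total N xS).
 assert (HP0 : 0 <= P) by (apply total_nonneg; auto).
 assert (HS0 : 0 <= S) by (apply total_nonneg; auto).
 set (D := S - P). set (dC := cost N C xS - cost N C xP).
 assert (Hb : forall t, 0 < t <= 1 -> dC <= D * p (S - t * D)).
 { intros t Ht.
   assert (Hf := feasible_comb N t xP xS HFP HF ltac:(lra)).
   assert (H := Hopt _ Hf). rewrite !welfare_eq in H; auto.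
   rewrite total_comb in H. fold P S in H.
   assert (Hcc := cost_comb N C t xP xS HA HFP HF ltac:(lra)).
   assert (EY : t * P + (1 - t) * S = S - t * D) by (unfold D; ring).
   rewrite EY in H.
   set (Y := S - t * D) in *.
   assert (HY0 : 0 <= Y) by (unfold Y, D; nra).
   assert (Hd := RInt_diff p Y S Hc HY0 HS0).
   assert (HI : RInt p Y S <= t * D * p Y).
   { destruct (Rle_lt_dec 0 D).
     - replace (t * D) with (S - Y) by (unfold Y; ring). apply RInt_ub; auto.
       split; [exact HY0|unfold Y; nra]. intros x Hx. apply Hni; lra.
     - assert (Hd2 := RInt_diff p S Y Hc HS0 HY0).
       assert ((Y - S) * p Y <= RInt p S Y).
       { apply RInt_lb; auto. split; [lra|unfold Y; nra]. intros x Hx. apply Hni; lra. }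
       replace (t * D) with (- (Y - S)) by (unfold Y; ring). lra. }
   assert (H3 : t * dC <= t * (D * p Y)) by (unfold dC; nra).
   apply Rmult_le_reg_l with t; lra. }
 destruct (Rle_lt_dec dC (D * p S)) as [ok|Hn]; auto. exfalso.
 set (g := dC - D * p S).
 set (B := Rabs D + 1).
 assert (HB : 1 <= B) by (unfold B; generalize (Rabs_pos D); lra).
 destruct (Hc S HS0 (g / B)) as [d [Hd Hcd]].
 { apply Rmult_lt_0_compat. unfold g; lra. apply Rinv_0_lt_compat; lra. }
 set (t := Rmin 1 (d / (2 * B))).
 assert (Hd2 : 0 < d / (2 * B)). { apply Rmult_lt_0_compat. lra. apply Rinv_0_lt_compat; lra. }
 assert (Ht : 0 < t <= 1 /\ t <= d / (2 * B)). { unfold t, Rmin; destruct Rle_dec; lra. }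
 assert (HtB : t * B <= d / 2).
 { apply Rle_trans with (d / (2 * B) * B). apply Rmult_le_compat_r; lra. right; field; lra. }
 specialize (Hb t ltac:(lra)).
 assert (HY0 : 0 <= S - t * D) by (unfold D; nra).
 assert (HtD : Rabs (S - t * D - S) < d).
 { replace (S - t * D - S) with (- (t * D)) by ring. rewrite Rabs_Ropp, Rabs_mult, Rabs_right by lra.
   unfold B in HtB. generalize (Rabs_pos D); nra. }
 specialize (Hcd _ HY0 HtD).
 assert (K1 : D * p (S - t * D) - D * p S <= Rabs D * Rabs (p (S - t * D) - p S)).
 { rewrite <- Rabs_mult. replace (D * p (S - t * D) - D * p S) with (D * (p (S - t * D) - p S)) by ring.
   apply Rle_abs. }
 assert (K2 : Rabs D * Rabs (p (S - t * D) - p S) <= Rabs D * (g / B)).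
 { apply Rmult_le_compat_l. apply Rabs_pos. lra. }
 assert (K3 : Rabs D * (g / B) < g).
 { apply Rlt_le_trans with (B * (g / B)). apply Rmult_lt_compat_r.
   apply Rmult_lt_0_compat. unfold g; lra. apply Rinv_0_lt_compat; lra. unfold B; lra.
   right; field; lra. }
 unfold g in *. lra. Qed.

Lemma part_b N p C dC0 xS xP : model N p C dC0 -> social_optimum N p C xS -> monopoly_output N p C xP ->
  p (total N xP) <> p (total N xS) ->
  exists c', derivable_pt_lim p (total N xP) c' /\
    1 <= cbar p (total N xS) (total N xP) c' /\
    3 / (3 + cbar p (total N xS) (total N xP) c') <= efficiency N p C xS xP.
Proof. intros Hm HS HM Hne.
 assert (HP := P_pos N p C dC0 xP Hm HM).
 assert (HWS := WS_pos N p C dC0 xS Hm HS).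
 destruct Hm as [HA [_ [[Hc [Hpos [Hni [_ [_ Hders]]]]] [_ [_ Hcv]]]]].
 destruct (Hders _ HP) as [[l Hl] [r Hr]].
 assert (E1 := mono_lr N p C xP l r HA Hcv HM HP Hl Hr).
 assert (E2 := l_le_r p _ l r Hcv HP Hl Hr).
 assert (Elr : l = r) by lra. subst l.
 exists r. split; [apply lr_deriv; auto|].
 assert (HF := proj1 HM). assert (HFS := proj1 HS).
 assert (Htan := supp_right p (total N xP) r Hcv ltac:(lra) Hr).
 assert (Hr0 := rderiv_nonpos p (total N xP) r Hni ltac:(lra) Hr).
 assert (H3 := F3 N p C xP r HA HM Htan Hr0).
 assert (H4 := F4 N p C xP xS r HA HM HFS Htan).
 assert (H5 := F5 N p C xS xP HA Hc Hni HS HF).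
 unfold efficiency. rewrite !welfare_eq in *; auto.
 set (P := total N xP) in *. set (S := total N xS) in *.
 set (cP := cost N C xP) in *. set (cS := cost N C xS) in *.
 assert (HS0 : 0 <= S) by (apply total_nonneg; auto).
 set (D := S - P).
 assert (HDpos : 0 < D).
 { destruct (Rtotal_order D 0) as [Hlt|[Heq|Hgt]]; auto; exfalso.
   - assert (HSP : S <= P) by (unfold D in Hlt; lra).
     assert (p P <= p S) by (apply Hni; lra).
     assert (D * (p P + r * P - p S) <= 0) by (fold D in H4, H5; nra).
     assert (p P + r * P - p S >= 0) by nra.
     assert (r * P <= 0) by nra. apply Hne; lra.
   - apply Hne. unfold D in Heq. replace S with P by lra. reflexivity. }
 assert (HSPd : 0 < S - P) by (unfold D in HDpos; lra).
 assert (HpSP : p S < p P). { assert (p S <= p P) by (apply Hni; unfold D in HDpos; lra). destruct H; auto. exfalso; apply Hne; auto. }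
 set (d := (p P - p S) / D).
 assert (Hd : 0 < d) by (unfold d; apply Rmult_lt_0_compat; [lra|apply Rinv_0_lt_compat; lra]).
 assert (Ed : p P - p S = d * D) by (unfold d; field; lra).
 set (c := - r).
 assert (Hcb : cbar p S P r = c / d).
 { unfold cbar. replace ((p S - p P) / (S - P)) with (- d) by (unfold d, D; field; lra).
   rewrite Rabs_Ropp, (Rabs_right d) by lra. rewrite Rabs_left1 by lra. reflexivity. }
 rewrite Hcb.
 assert (TS := Htan S HS0). fold D in TS.
 assert (Hdc : d <= c). { unfold c. assert (d * D <= - r * D) by nra. nra. }
 split. { apply Rmult_le_reg_r with d; auto. unfold Rdiv. rewrite Rmult_assoc, Rinv_l; lra. }
 assert (I1 := RInt_lb_aff p 0 P (p P) r P Hc ltac:(lra)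
   (fun x Hx => Htan x ltac:(lra))).
 assert (I2 := RInt_ub_aff p P S (p P) ((p S - p P) / (S - P)) P Hc ltac:(unfold D in HDpos; lra)
   (fun x Hx => chord_above p P S x Hcv ltac:(lra) ltac:(unfold D in HDpos; lra) ltac:(lra))).
 assert (Hdiff := RInt_diff p P S Hc ltac:(lra) HS0).
 replace ((p S - p P) / (S - P)) with (- d) in I2 by (unfold d, D; field; lra).
 fold D in H4, H5.
 set (WP := RInt p 0 P - cP). set (WS := RInt p 0 S - cS).
 assert (HWP : 3 / 2 * c * (P * P) <= WP).
 { unfold WP, c. replace ((0 - P) ^ 2) with (P * P) in I1 by ring. replace ((P - P)^2) with 0 in I1 by ring. lra. }
 assert (HWd : WS - WP <= c * P * D - d * D * D / 2).
 { unfold WS, WP, c. replace ((S - P)^2) with (D * D) in I2 by (unfold D; ring).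
   replace ((P - P)^2) with 0 in I2 by ring. fold D in I2. nra. }
 set (cb := c / d).
 assert (Ecb : cb * d = c) by (unfold cb; field; lra).
 assert (Hcb0 : 0 <= cb) by (unfold cb; apply Rmult_le_pos; [lra| left; apply Rinv_0_lt_compat; lra]).
 assert (Key : 3 * WS <= (3 + cb) * WP).
 { assert (T1 : d * (cb * WP - 3 * (WS - WP)) >= 3 / 2 * (c * P - d * D) * (c * P - d * D)).
   { replace (d * (cb * WP - 3 * (WS - WP))) with (c * WP - 3 * d * (WS - WP)) by (rewrite <- Ecb; ring).
     assert (c * (3 / 2 * c * (P * P)) <= c * WP) by (apply Rmult_le_compat_l; lra).
     assert (3 * d * (WS - WP) <= 3 * d * (c * P * D - d * D * D / 2)) by (apply Rmult_le_compat_l; lra).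
     nra. }
   assert (0 <= cb * WP - 3 * (WS - WP)).
   { destruct (Rle_lt_dec 0 (cb * WP - 3 * (WS - WP))) as [ok|Hn]; auto.
     assert (0 <= (c * P - d * D) * (c * P - d * D)) by apply (Rle_0_sqr (c * P - d * D)). assert (0 < d * (-(cb * WP - 3 * (WS - WP)))) by (apply Rmult_lt_0_compat; lra). lra. }
   lra. }
 assert (HWS2 : 0 < WS) by exact HWS. apply Rmult_le_reg_r with ((3 + cb) * WS). apply Rmult_lt_0_compat; lra.
 replace (3 / (3 + cb) * ((3 + cb) * WS)) with (3 * WS) by (field; lra).
 replace (WP / WS * ((3 + cb) * WS)) with ((3 + cb) * WP) by (field; lra).
 exact Key.
Qed.

Definition pex (q : R) : R := Rmax 0 (1 - q).

Lemma pex_lin x : x <= 1 -> pex x = 1 - x.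
Proof. intros; unfold pex; apply Rmax_right; lra. Qed.
Lemma pex_zero x : 1 <= x -> pex x = 0.
Proof. intros; unfold pex; apply Rmax_left; lra. Qed.
Lemma pex_cases x : (x <= 1 /\ pex x = 1 - x) \/ (1 <= x /\ pex x = 0).
Proof. destruct (Rle_lt_dec x 1). left; split; auto; apply pex_lin; auto.
 right; split; [lra|apply pex_zero; lra]. Qed.

Lemma pex_cont : cont_nonneg pex.
Proof. intros x _ eps Heps. exists eps; split; auto. intros y _ Hy.
 apply Rabs_def2 in Hy. apply Rabs_def1;
 destruct (pex_cases x) as [[? ->]|[? ->]]; destruct (pex_cases y) as [[? ->]|[? ->]]; lra. Qed.

Lemma pex_rd q : exists l, right_deriv pex q l.
Proof. destruct (Rlt_le_dec q 1).
 - exists (-1). intros eps Heps. exists (1 - q); split; [lra|]. intros h Hh.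
   rewrite !pex_lin by lra. replace ((1 - (q + h) - (1 - q)) / h - -1) with 0 by (field; lra).
   rewrite Rabs_R0; auto.
 - exists 0. intros eps Heps. exists 1; split; [lra|]. intros h Hh.
   rewrite !pex_zero by lra. replace ((0 - 0) / h - 0) with 0 by (field; lra).
   rewrite Rabs_R0; auto. Qed.

Lemma pex_ld q : exists l, left_deriv pex q l.
Proof. destruct (Rle_lt_dec q 1).
 - exists (-1). intros eps Heps. exists 1; split; [lra|]. intros h Hh.
   rewrite !pex_lin by lra. replace ((1 - (q + h) - (1 - q)) / h - -1) with 0 by (field; lra).
   rewrite Rabs_R0; auto.
 - exists 0. intros eps Heps. exists (q - 1); split; [lra|]. intros h Hh.
   rewrite !pex_zero by lra. replace ((0 - 0) / h - 0) with 0 by (field; lra).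
   rewrite Rabs_R0; auto. Qed.

Definition Cex (n : nat) (x : R) : R := 0.

Lemma ex_model : model 1 pex Cex (fun _ => 0).
Proof. unfold model. split; [|split; [|split; [|split; [|split]]]].
 - intros n _. unfold Cex. split; [intros; lra|]. split; [intros x y t _ _ _; lra|].
   split; [intros x _ eps Heps; exists 1; split; [lra|]; intros; rewrite Rminus_0_r, Rabs_R0; auto|].
   split; [intros x y _ _; cbv beta; lra|]. split; [|reflexivity].
   exists (fun _ => 0). split; intros x _.
   apply (derivable_pt_lim_const 0 x).
   apply continuity_pt_const. intros u v; auto.
 - intros n _ eps Heps. exists 1; split; [lra|]. intros h Hh. unfold Cex; cbv beta.
   replace ((0 - 0) / h - 0) with 0 by (field; lra). rewrite Rabs_R0; auto.
 - split; [apply pex_cont|]. split; [intros q _; unfold pex; apply Rmax_l|].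
   split; [intros x y _ Hxy; destruct (pex_cases x) as [[? ->]|[? ->]]; destruct (pex_cases y) as [[? ->]|[? ->]]; lra|].
   split; [rewrite pex_lin by lra; lra|]. split; [apply pex_rd|].
   intros q _. split; [apply pex_ld|apply pex_rd].
 - exists 1. split; [lra|]. intros n _. rewrite pex_zero; lra.
 - exists 0%nat. split; [lia|]. rewrite pex_lin; lra.
 - intros x y t Hx Hy Ht. unfold pex. apply Rmax_lub.
   + apply Rplus_le_le_0_compat; apply Rmult_le_pos; try apply Rmax_l; lra.
   + assert (t * (1 - x) <= t * Rmax 0 (1 - x)) by (apply Rmult_le_compat_l; [lra|apply Rmax_r]).
     assert ((1 - t) * (1 - y) <= (1 - t) * Rmax 0 (1 - y)) by (apply Rmult_le_compat_l; [lra|apply Rmax_r]).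
     lra.
Qed.

Lemma total1 x : total 1 x = x 0%nat.
Proof. unfold total; simpl; ring. Qed.

Lemma cost1 x : cost 1 Cex x = 0.
Proof. unfold cost, Cex; simpl; ring. Qed.

Lemma RInt_pex_a a : 0 <= a <= 1 -> RInt pex 0 a = a - a * a / 2.
Proof. intros Ha.
 assert (E : RInt pex 0 a = RInt (fun x => 1 + (-1) * (x - 0)) 0 a).
 { apply RInt_ext. intros x Hx. unfold Rmin, Rmax in Hx. destruct Rle_dec; try lra. rewrite pex_lin; lra. }
 rewrite E, RInt_affine. simpl; nra. Qed.

Lemma RInt_pex_le Y : 0 <= Y -> RInt pex 0 Y <= 1 / 2.
Proof. intros HY.
 assert (Hd := RInt_diff pex 1 Y pex_cont ltac:(lra) HY).
 rewrite (RInt_pex_a 1) in Hd by lra.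
 destruct (Rle_lt_dec 1 Y).
 - assert (RInt pex 1 Y <= (Y - 1) * 0).
   { apply RInt_ub; [apply pex_cont|lra|]. intros x Hx. rewrite pex_zero; lra. }
   lra.
 - assert (Hd2 := RInt_diff pex Y 1 pex_cont HY ltac:(lra)).
   assert ((1 - Y) * 0 <= RInt pex Y 1).
   { apply RInt_lb; [apply pex_cont|lra|]. intros x Hx. unfold pex; apply Rmax_l. }
   rewrite (RInt_pex_a 1) in Hd2 by lra. lra. Qed.

Lemma part_c : exists (N : nat) (p : R -> R) (C : nat -> R -> R) (dC0 : nat -> R)
          (xS xP : nat -> R),
     model N p C dC0 /\ social_optimum N p C xS /\ monopoly_output N p C xP /\
     p (total N xP) <> p (total N xS) /\
     (exists c', derivable_pt_lim p (total N xP) c' /\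
                 cbar p (total N xS) (total N xP) c' = 1) /\
     efficiency N p C xS xP = 3 / 4.
Proof.
 exists 1%nat, pex, Cex, (fun _ => 0), (fun _ => 1), (fun _ => 1/2).
 assert (FS : feasible 1 (fun _ => 1)) by (intros n _; lra).
 assert (FP : feasible 1 (fun _ => 1/2)) by (intros n _; lra).
 split; [apply ex_model|].
 rewrite !total1.
 split.
 { split; auto. intros y Hy. rewrite !welfare_eq; auto; try apply pex_cont.
   rewrite !cost1, !total1, (RInt_pex_a 1) by lra.
   assert (RInt pex 0 (y 0%nat) <= 1/2) by (apply RInt_pex_le; apply Hy; lia). lra. }
 split.
 { split; auto. intros y Hy. unfold profit. rewrite !total1.
   change (sumN 1 (fun n => Cex n (y n))) with (cost 1 Cex y).
   change (sumN 1 (fun n => Cex n (1/2))) with (cost 1 Cex (fun _ => 1/2)).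
   unfold Cex. rewrite (pex_lin (1/2)) by lra.
   assert (H0 := Hy 0%nat ltac:(lia)).
   destruct (pex_cases (y 0%nat)) as [[? ->]|[? ->]]; cbv beta; try (assert (0 <= (y 0%nat - 1/2) * (y 0%nat - 1/2)) by apply Rle_0_sqr); nra. }
 split.
 { rewrite pex_lin, pex_zero by lra. lra. }
 split.
 { exists (-1). split.
   - intros eps Heps. exists (mkposreal (1/2) ltac:(lra)). intros h Hh0 Hh. simpl in Hh.
     apply Rabs_def2 in Hh. rewrite !pex_lin by lra.
     replace ((1 - (1 / 2 + h) - (1 - 1 / 2)) / h - -1) with 0 by (field; auto).
     rewrite Rabs_R0; auto.
   - unfold cbar. rewrite (pex_lin (1/2)), (pex_zero 1) by lra.
     replace ((0 - (1 - 1/2)) / (1 - 1/2)) with (-1) by field.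
     rewrite Rabs_left by lra. field. }
 unfold efficiency. rewrite !welfare_eq; auto; try apply pex_cont.
 rewrite !cost1, !total1, (RInt_pex_a 1), (RInt_pex_a (1/2)) by lra. field.
Qed.
Theorem theorem3 :
  (forall (N : nat) (p : R -> R) (C : nat -> R -> R) (dC0 : nat -> R)
          (xS xP : nat -> R),
     model N p C dC0 ->
     social_optimum N p C xS ->
     monopoly_output N p C xP ->
     (* (a) *)
     (p (total N xP) = p (total N xS) -> efficiency N p C xS xP = 1) /\
     (* (b) *)
     (p (total N xP) <> p (total N xS) ->
        exists c', derivable_pt_lim p (total N xP) c' /\
          1 <= cbar p (total N xS) (total N xP) c' /\
          3 / (3 + cbar p (total N xS) (total N xP) c') <= efficiency N p C xS xP))
  /\
  (* (c) tightness at cbar = 1 *)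
  (exists (N : nat) (p : R -> R) (C : nat -> R -> R) (dC0 : nat -> R)
          (xS xP : nat -> R),
     model N p C dC0 /\ social_optimum N p C xS /\ monopoly_output N p C xP /\
     p (total N xP) <> p (total N xS) /\
     (exists c', derivable_pt_lim p (total N xP) c' /\
                 cbar p (total N xS) (total N xP) c' = 1) /\
     efficiency N p C xS xP = 3 / 4).
Proof.
 split.
 - intros N p C dC0 xS xP Hm HS HP. split.
   + apply (part_a N p C dC0 xS xP Hm HS HP).
   + apply (part_b N p C dC0 xS xP Hm HS HP).
 - exact part_c.
Qed.
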